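(* Let $p$ be a prime and $n, k$ positive integers, $d = \gcd(n,k)$. Let $L(X) = \sum_{i=0}^t \alpha_i X^{p^i}$, $\alpha_i \in \mathbb{F}_p$, be a $p$-linearized polynomial without multiple roots, and let $L'$ be a $p$-linearized polynomial over $\mathbb{F}_p$ with $S_k^{2k}(X) = X - X^{p^k} = L \circ L'(X)$. Let $l'$ be the conventional $p$-associate of $L'$, let $w = (l', t_d^k)$, $u = l'/w$, $v = t_d^k/w$, and let $U, V$ be the linearized $p$-associates of $u, v$. Then $$U \circ L = S_d^{2d} \circ V.$$
   Context: For positive integers $l \mid k$ define $T_l^k(X) = \sum_{i=0}^{k/l - 1} X^{p^{li}}$ and $S_l^k(X) = \sum_{i=0}^{k/l-1} (-1)^i X^{p^{li}}$. For $l(X) = \sum \alpha_i X^i \in \mathbb{F}_p[X]$, its linearized $p$-associate is $\sum \alpha_i X^{p^i}$, and conversely $l$ is the conventional $p$-associate of that linearized polynomial; $t_d^k(X) = \sum_{i=0}^{k/d-1} X^{di}$ is the conventional $p$-associate of $T_d^k$. $(f,g)$ denotes the monic gcd in $\mathbb{F}_p[X]$. $\circ$ denotes composition. *)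

(* Defs.v *)
From mathcomp Require Import all_boot all_order all_algebra all_field.
Set Implicit Arguments. Unset Strict Implicit. Unset Printing Implicit Defensive.
Import GRing.Theory.
Local Open Scope ring_scope.

Definition lin_assoc (p : nat) (l : {poly 'F_p}) : {poly 'F_p} :=
  \sum_(i < size l) l`_i *: 'X^(p ^ i).

Definition T_lin (p l k : nat) : {poly 'F_p} :=
  \sum_(i < k %/ l) 'X^(p ^ (l * i)).

Definition S_lin (p l k : nat) : {poly 'F_p} :=
  \sum_(i < k %/ l) (-1) ^+ i *: 'X^(p ^ (l * i)).

Definition t_conv (p d k : nat) : {poly 'F_p} :=
  \sum_(i < k %/ d) 'X^(d * i).

Definition mgcd (p : nat) (f g : {poly 'F_p}) : {poly 'F_p} :=
  (lead_coef (gcdp f g))^-1 *: gcdp f g.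

(* Main.v *)
Require Import Defs.
From mathcomp Require Import all_boot all_order all_algebra all_field.
Import GRing.Theory.
Local Open Scope ring_scope.

Lemma la_ext {p : nat} {l : {poly 'F_p}} {n : nat} : (size l <= n)%N ->
  lin_assoc l = \sum_(i < n) l`_i *: 'X^(p ^ i).
Proof.
move=> hn; rewrite /lin_assoc (big_ord_widen n (fun i => l`_i *: 'X^(p ^ i)) hn).
rewrite big_mkcond; apply: eq_bigr => i _; case: ltnP => // hi.
by rewrite nth_default // scale0r.
Qed.

Lemma la0 (p : nat) : lin_assoc (0 : {poly 'F_p}) = 0.
Proof. by rewrite /lin_assoc size_poly0 big_ord0. Qed.

Lemma laD (p : nat) (a b : {poly 'F_p}) :
  lin_assoc (a + b) = lin_assoc a + lin_assoc b.
Proof.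
set n := maxn (size a) (size b).
rewrite (la_ext (n:=n) (size_polyD a b)) (la_ext (n:=n) (leq_maxl _ _)).
rewrite (la_ext (n:=n) (leq_maxr _ _)) -big_split; apply: eq_bigr => i _.
by rewrite coefD scalerDl.
Qed.

Lemma laZ (p : nat) c (a : {poly 'F_p}) :
  lin_assoc (c *: a) = c *: lin_assoc a.
Proof.
rewrite (la_ext (n:=size a) (size_scale_leq c a)) /lin_assoc scaler_sumr.
by apply: eq_bigr => i _; rewrite coefZ scalerA.
Qed.

Lemma laB (p : nat) (a b : {poly 'F_p}) :
  lin_assoc (a - b) = lin_assoc a - lin_assoc b.
Proof. by rewrite laD -scaleN1r laZ scaleN1r. Qed.

Lemma la_sum (p : nat) (I : Type) (r : seq I) (F : I -> {poly 'F_p}) :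
  lin_assoc (\sum_(i <- r) F i) = \sum_(i <- r) lin_assoc (F i).
Proof. exact: (big_morph _ (@laD p) (@la0 p)). Qed.

Lemma laXn (p : nat) i : lin_assoc ('X^i : {poly 'F_p}) = 'X^(p ^ i).
Proof.
rewrite (la_ext (n:=i.+1)) ?size_polyXn // big_ord_recr /= big1 ?add0r.
  by rewrite coefXn eqxx scale1r.
by move=> j _; rewrite coefXn; case: eqP => [h|]; [have := ltn_ord j; rewrite h ltnn | rewrite scale0r].
Qed.

Lemma laMX (p : nat) (b : {poly 'F_p}) : prime p ->
  lin_assoc (b * 'X) = lin_assoc b ^+ p.
Proof.
move=> pr.
have chP : p \in [pchar {poly 'F_p}] := rmorph_pchar polyC (pchar_Fp pr).
rewrite (la_ext (n:=(size b).+1)); last first.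
  by apply: leq_trans (size_polyMleq _ _) _; rewrite size_polyX addn2.
rewrite big_ord_recl coefMX eqxx scale0r add0r /lin_assoc.
rewrite -[_ ^+ p](pFrobenius_autE chP) rmorph_sum; apply: eq_bigr => i _ /=.
rewrite coefMX /= pFrobenius_autE exprZn -exprM -expnSr.
have Hc : forall c : 'F_p, c ^+ p = c by move=> c; have := expf_card c; rewrite card_Fp.
by rewrite Hc.
Qed.

Lemma laMXn (p : nat) (b : {poly 'F_p}) i : prime p ->
  lin_assoc (b * 'X^i) = lin_assoc b ^+ (p ^ i).
Proof.
move=> pr; elim: i => [|i IH]; first by rewrite expr0 mulr1 expn0 expr1.
by rewrite exprSr mulrA laMX // IH -exprM expnSr.
Qed.

Lemma la_comp (p : nat) (a Q : {poly 'F_p}) :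
  lin_assoc a \Po Q = \sum_(i < size a) a`_i *: Q ^+ (p ^ i).
Proof.
rewrite /lin_assoc linear_sum; apply: eq_bigr => i _ /=.
by rewrite comp_polyZ comp_Xn_poly.
Qed.

Lemma laM (p : nat) (a b : {poly 'F_p}) : prime p ->
  lin_assoc (a * b) = lin_assoc a \Po lin_assoc b.
Proof.
move=> pr; rewrite la_comp -{1}[a]coefK poly_def mulr_suml la_sum.
apply: eq_bigr => i _; by rewrite -scalerAl mulrC laZ laMXn.
Qed.

Lemma la_coef (p : nat) (a : {poly 'F_p}) i : (1 < p)%N ->
  (lin_assoc a)`_(p ^ i) = a`_i.
Proof.
move=> p1; rewrite (la_ext (n:=maxn (size a) i.+1)) ?leq_maxl //.
have hi : (i < maxn (size a) i.+1)%N by rewrite leq_max ltnSn orbT.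
rewrite coef_sum (bigD1 (Ordinal hi)) //= coefZ coefXn eqxx mulr1 big1 ?addr0 //.
move=> j hj; rewrite coefZ coefXn eqn_exp2l //.
case: (i =P j) => [hij|_]; last by rewrite mulr0.
have hj' : j = Ordinal hi by apply: val_inj; exact: (esym hij).
by rewrite hj' eqxx in hj.
Qed.

Lemma la_inj (p : nat) (a b : {poly 'F_p}) : (1 < p)%N ->
  lin_assoc a = lin_assoc b -> a = b.
Proof.
by move=> p1 h; apply/polyP => i; rewrite -(la_coef _ a i p1) -(la_coef _ b i p1) h.
Qed.

Lemma S_lin_eq (p m : nat) : (0 < m)%N ->
  S_lin p m (2 * m) = lin_assoc (1 - 'X^m).
Proof.
move=> m0; rewrite laB -(expr0 'X) !laXn /S_lin mulnK //.
rewrite !big_ord_recl big_ord0 addr0 /= muln0 expr0 scale1r expr1 muln1.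
by rewrite scaleN1r.
Qed.

Theorem proposition3 (p n k : nat) (l l' : {poly 'F_p}) :
  prime p -> (0 < n)%N -> (0 < k)%N ->
  let d := gcdn n k in
  separable_poly (lin_assoc l) ->
  lin_assoc l \Po lin_assoc l' = S_lin p k (2 * k) ->
  let w := mgcd l' (t_conv p d k) in
  let u := l' %/ w in
  let v := t_conv p d k %/ w in
  lin_assoc u \Po lin_assoc l = S_lin p d (2 * d) \Po lin_assoc v.
Proof.
move=> pr n0 k0 d _ H w u v.
have p1 : (1 < p)%N by apply: prime_gt1.
have d0 : (0 < d)%N by rewrite /d gcdn_gt0 k0 orbT.
have dk : (d %| k)%N by apply: dvdn_gcdr.
have Hll : l * l' = 1 - 'X^k.
  by apply: (@la_inj p _ _ p1); rewrite laM // H S_lin_eq.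
have Ht : (1 - 'X^d) * t_conv p d k = 1 - 'X^k.
  rewrite /t_conv.
  have -> : \sum_(i < k %/ d) ('X^(d * i) : {poly 'F_p}) = \sum_(i < k %/ d) ('X^d) ^+ i.
    by apply: eq_bigr => i _; rewrite exprM.
  rewrite -opprB mulNr -subrX1 -exprM mulnC divnK // opprB //.
have t0 : t_conv p d k != 0.
  apply/eqP => ht; move: Ht; rewrite ht mulr0 => Ht0.
  have := congr1 (fun q : {poly 'F_p} => q`_0) Ht0; rewrite /=.
  rewrite coef0 coefB coef1 coefXn eqxx.
  have -> : (0%N == k) = false by apply/eqP => hk; rewrite -hk in k0.
  by rewrite subr0 => /eqP; rewrite eq_sym oner_eq0.
have g0 : gcdp l' (t_conv p d k) != 0 by rewrite gcdp_eq0 negb_and t0 orbT.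
have c0 : (lead_coef (gcdp l' (t_conv p d k)))^-1 != 0 by rewrite invr_eq0 lead_coef_eq0.
have w0 : w != 0 by rewrite /w /mgcd scaler_eq0 negb_or c0 g0.
have wl : w %| l' by rewrite /w /mgcd dvdpZl // dvdp_gcdl.
have wt : w %| t_conv p d k by rewrite /w /mgcd dvdpZl // dvdp_gcdr.
have Hul : u * l = (1 - 'X^d) * v.
  apply: (mulIf w0).
  rewrite -mulrA [l * w]mulrC mulrA divpK // -mulrA divpK //.
  by rewrite mulrC Hll Ht.
by rewrite -laM // Hul laM // S_lin_eq.
Qed.
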